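(* Consider the uplink system described in the context and the problem $$\text{(P)}:\ \max\ \log\Big|\sum_{v=1}^U \mathbf G_v(\mathbf w_v)\mathbf Q_v\mathbf G_v^H(\mathbf w_v)+\mathbf I_M\Big|$$ over $\mathbf Q_v\in\mathbb C^{N_v\times N_v}$, $\mathbf Q_v\succeq\mathbf 0$, $\mathrm{tr}(\mathbf Q_v)\le P_v$, and $\mathbf w_v\in\mathbb R^{N_v}$ with $0\le w_{v,n}\le W_v$ and $w_{v,n}\ne w_{v,n'}$ for $n\neq n'$, for all $v\in\{1,\dots,U\}$. Suppose that for some user $u$ we have $L_u=1$. Let $\mathcal U'=\{1,\dots,U\}\setminus\{u\}$. Then (P) is equivalent (in the sense of having the same optimal objective value) to the problem $$\max\ \log\Big|\sum_{v\in\mathcal U'}\mathbf G_v(\mathbf w_v)\mathbf Q_v\mathbf G_v^H(\mathbf w_v)+MN_uP_u|\gamma_{u,1}|^2\mathbf a_{u,\mathrm R}(\beta_{u,1})\mathbf a_{u,\mathrm R}^H(\beta_{u,1})+\mathbf I_M\Big|$$ over $\mathbf Q_v\succeq\mathbf 0$, $\mathrm{tr}(\mathbf Q_v)\le P_v$, $0\le w_{v,n}\le W_v$, $w_{v,n}\ne w_{v,n'}$ ($n\ne n'$), for all $v\in\mathcal U'$.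
   Context: A base station (BS) has an $M$-antenna uniform linear array with spacing $d=\lambda/2$ ($\lambda$ the wavelength). User $v\in\{1,\dots,U\}$ has $N_v$ antennas at positions $w_{v,1},\dots,w_{v,N_v}\in[0,W_v]$ on a line, power budget $P_v>0$, and $L_v$ propagation paths to the BS with complex gains $\gamma_{v,l}$, angles of arrival $\beta_{v,l}\in[0,\pi]$ and angles of departure $\theta_{v,l}\in[0,\pi]$. Define $\mathbf a_{v,\mathrm R}(\beta)=\frac1{\sqrt M}[1,e^{-j\frac{2\pi}{\lambda}d\cos\beta},\dots,e^{-j\frac{2\pi}{\lambda}(M-1)d\cos\beta}]^T$, $\mathbf a_{v,\mathrm T}(\theta,\mathbf w_v)=\frac1{\sqrt{N_v}}[e^{-j\frac{2\pi}{\lambda}w_{v,1}\cos\theta},\dots,e^{-j\frac{2\pi}{\lambda}w_{v,N_v}\cos\theta}]^T$, $\boldsymbol\Gamma_v=\mathrm{diag}(\gamma_{v,1},\dots,\gamma_{v,L_v})$, $\mathbf A_{v,\mathrm R}=[\mathbf a_{v,\mathrm R}(\beta_{v,l})]_{l=1}^{L_v}\in\mathbb C^{M\times L_v}$, $\mathbf A_{v,\mathrm T}(\mathbf w_v)=[\mathbf a_{v,\mathrm T}(\theta_{v,l},\mathbf w_v)]_{l=1}^{L_v}\in\mathbb C^{N_v\times L_v}$, and the channel $\mathbf G_v(\mathbf w_v)=\sqrt{MN_v}\,\mathbf A_{v,\mathrm R}\boldsymbol\Gamma_v\mathbf A_{v,\mathrm T}^H(\mathbf w_v)$. $|\cdot|$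 denotes determinant. *)

(* Defs.v *)
From mathcomp Require Import all_boot all_order all_algebra.
From mathcomp Require Import complex.
From mathcomp Require Import all_classical all_reals all_analysis.

Set Implicit Arguments.
Unset Strict Implicit.
Unset Printing Implicit Defensive.

Import Order.TTheory GRing.Theory Num.Theory.
Local Open Scope ring_scope.

Local Open Scope sesquilinear_scope.

Section Channel.
Variable R : realType.
Local Notation C := R[i].

Definition expi (t : R) : C := Complex (cos t) (sin t).

(* the ULA steering vector at the BS, with d = lambda/2 *)
Definition aR (M : nat) (lam beta : R) : 'cV[C]_M :=
  \col_(i < M) (((Num.sqrt (M%:R : R))^-1)%:C%C *
     expi (- (2 * pi / lam) * ((nat_of_ord i)%:R * (lam / 2)) * cos beta)).

Definition aT (N : nat) (lam theta : R) (w : 'I_N -> R) : 'cV[C]_N :=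
  \col_(n < N) (((Num.sqrt (N%:R : R))^-1)%:C%C *
     expi (- (2 * pi / lam) * w n * cos theta)).

Definition ARmx (M L : nat) (lam : R) (beta : 'I_L -> R) : 'M[C]_(M, L) :=
  \matrix_(m < M, l < L) aR M lam (beta l) m 0.

Definition ATmx (N L : nat) (lam : R) (theta : 'I_L -> R) (w : 'I_N -> R)
  : 'M[C]_(N, L) :=
  \matrix_(n < N, l < L) aT lam (theta l) w n 0.

Definition Gammamx (L : nat) (gamma : 'I_L -> C) : 'M[C]_L :=
  diag_mx (\row_(l < L) gamma l).

Definition chan (M N L : nat) (lam : R) (gamma : 'I_L -> C)
  (beta theta : 'I_L -> R) (w : 'I_N -> R) : 'M[C]_(M, N) :=
  (Num.sqrt ((M * N)%:R : R))%:C%C *: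
    (ARmx M lam beta *m Gammamx gamma *m (ATmx lam theta w) ^t*).

Definition psdmx (n : nat) (Q : 'M[C]_n) : Prop :=
  Q ^t* = Q /\ forall x : 'cV[C]_n, 0 <= (x ^t* *m Q *m x) 0 0.

Definition user_feasible (N : nat) (Pv Wv : R) (Q : 'M[C]_N) (w : 'I_N -> R)
  : Prop :=
  [/\ psdmx Q, \tr Q <= Pv%:C%C,
      (forall n, 0 <= w n <= Wv) & injective w].

End Channel.

(* Main.v *)
Require Import Defs.
From mathcomp Require Import all_boot all_order all_algebra.
From mathcomp Require Import complex.
From mathcomp Require Import all_classical all_reals all_analysis.
From mathcomp Require Import ring.

Import Order.TTheory GRing.Theory Num.Theory.
Local Open Scope ring_scope.
Local Open Scope complex_scope.
Local Open Scope sesquilinear_scope.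
Local Open Scope classical_set_scope.
Section Gen.
Set Implicit Arguments. Unset Strict Implicit.
Variable C : numClosedFieldType.
Local Open Scope ring_scope.

Definition psd n (Q : 'M[C]_n) :=
  Q ^t* = Q /\ forall x : 'cV[C]_n, 0 <= (x ^t* *m Q *m x) 0 0.

Arguments psd {n}.

Lemma trC_mul m n p (A : 'M[C]_(m, n)) (B : 'M[C]_(n, p)) :
  (A *m B) ^t* = B ^t* *m A ^t*.
Proof. by rewrite trmx_mul map_mxM. Qed.

Lemma trC_add m n (A B : 'M[C]_(m, n)) : (A + B) ^t* = A ^t* + B ^t*.
Proof. by rewrite linearD /= map_mxD. Qed.

Lemma trC_scale m n a (A : 'M[C]_(m, n)) : (a *: A) ^t* = (Num.conj a) *: A ^t*.
Proof. by rewrite linearZ /= map_mxZ. Qed.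

Lemma trC1 n : (1%:M : 'M[C]_n) ^t* = 1%:M.
Proof. by rewrite trmx1 map_mx1. Qed.

Lemma trC_sum n (I : finType) (P : pred I) (F : I -> 'M[C]_n) :
  (\sum_(i | P i) F i) ^t* = \sum_(i | P i) (F i) ^t*.
Proof.
apply: (big_morph (fun A : 'M[C]_n => A ^t*)); first exact: trC_add.
by rewrite trmx0 map_mx0.
Qed.

Lemma normsq_ge0 n (x : 'cV[C]_n) : 0 <= (x ^t* *m x) 0 0.
Proof.
rewrite !mxE; apply: sumr_ge0 => i _; rewrite !mxE mulrC; exact: mul_conjC_ge0.
Qed.

Lemma psd_conj m n (G : 'M[C]_(m, n)) (Q : 'M[C]_n) : psd Q -> psd (G *m Q *m G ^t*).
Proof.
move=> [hQ qQ]; split.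
  by rewrite !trC_mul trmxCK hQ mulmxA.
move=> x; have := qQ (G ^t* *m x).
by rewrite trC_mul trmxCK !mulmxA.
Qed.

Lemma psd_add n (A B : 'M[C]_n) : psd A -> psd B -> psd (A + B).
Proof.
move=> [hA qA] [hB qB]; split; first by rewrite trC_add hA hB.
by move=> x; rewrite mulmxDr mulmxDl mxE addr_ge0.
Qed.

Lemma psd0 n : psd (0 : 'M[C]_n).
Proof.
split; first by rewrite trmx0 map_mx0.
by move=> x; rewrite mulmx0 mul0mx mxE.
Qed.

Lemma psd_sum n (I : finType) (P : pred I) (F : I -> 'M[C]_n) :
  (forall i, P i -> psd (F i)) -> psd (\sum_(i | P i) F i).
Proof.
move=> h; apply: (big_ind (@psd n)) => //; [exact: psd0 | exact: psd_add].
Qed.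

End Gen.
Arguments psd {C n}.
Section Gen2.
Set Implicit Arguments. Unset Strict Implicit.
Variable C : numClosedFieldType.
Local Open Scope ring_scope.

Lemma det_rank1 n (x : 'cV[C]_n) (y : 'rV[C]_n) :
  \det (1%:M + x *m y) = 1 + (y *m x) 0 0.
Proof.
set L : 'M[C]_(n + 1) := block_mx 1%:M 0 y 1%:M.
set Mi : 'M[C]_(n + 1) := block_mx (1%:M + x *m y) x 0 1%:M.
set Rr : 'M[C]_(n + 1) := block_mx 1%:M 0 (- y) 1%:M.
have E : L *m Mi *m Rr = block_mx 1%:M x 0 (1%:M + y *m x).
  rewrite /L /Mi /Rr !mulmx_block.
  rewrite !mulmx0 !mul0mx !mulmx1 !mul1mx !addr0 !add0r.
  congr block_mx.
  - by rewrite mulmxN addrK.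
  - rewrite mulmxN mulmxDr mulmx1 mulmxDl mul1mx !mulmxA.
    by rewrite opprD addrA addrK subrr.
  - by rewrite addrC.
have := congr1 determinant E.
rewrite !det_mulmx /L /Mi /Rr det_lblock det_ublock det_lblock !det1 !mul1r !mulr1.
by rewrite det_ublock det1 mul1r det_mx11 !mxE eqxx mulr1n => ->.
Qed.

End Gen2.
Section Gen3.
Set Implicit Arguments. Unset Strict Implicit.
Variable C : numClosedFieldType.
Local Open Scope ring_scope.

Lemma quad_entry m n (P : 'M[C]_(m, n)) (A : 'M[C]_n) i :
  (P *m A *m P ^t*) i i = ((row i P) *m A *m (row i P) ^t*) 0 0.
Proof.
rewrite !mxE; apply: eq_bigr => j _; rewrite !mxE; congr (_ * _).
by apply: eq_bigr => k _; rewrite !mxE.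
Qed.

Lemma herm_of n (A : 'M[C]_n) : A ^t* = A -> A \is hermsymmx.
Proof. by move=> h; apply/is_hermitianmxP; rewrite expr0 scale1r h. Qed.

Lemma detpos n (H : 'M[C]_n) : psd H -> 0 < \det (H + 1%:M).
Proof.
move=> [hH qH].
set A := H + 1%:M.
have hA : A \is hermsymmx by apply: herm_of; rewrite trC_add hH trC1.
have /orthomx_spectralP eA := hermitian_normalmx hA.
have Pu := spectral_unit A.
have Pun := spectral_unitarymx A.
set P := spectralmx A in eA Pu Pun.
set d := spectral_diag A in eA.
have eD : diag_mx d = P *m A *m P ^t*.
  rewrite [in RHS]eA -invmx_unitary // !mulmxA mulmxV // mul1mx.
  by rewrite -mulmxA mulmxV // mulmx1.
rewrite eA !det_mulmx det_inv det_diag mulrC mulrA.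
rewrite mulrV -?unitmxE // mul1r.
apply: prodr_gt0 => i _.
have -> : d 0 i = diag_mx d i i by rewrite mxE eqxx mulr1n.
rewrite eD quad_entry /A mulmxDr mulmxDl mulmx1 mxE.
have -> : (row i P *m (row i P) ^t*) 0 0 = 1.
  by have := quad_entry P 1%:M i; rewrite !mulmx1 (unitarymxP Pun) mxE eqxx => <-.
have := qH ((row i P) ^t*); rewrite trmxCK => h.
by apply: (lt_le_trans ltr01); rewrite addrC lerDl.
Qed.

Lemma normsq_ge0' n (x : 'cV[C]_n) : 0 <= (x ^t* *m x) 0 0.
Proof. exact: normsq_ge0. Qed.

Lemma quad_inv_ge0 n (H : 'M[C]_n) (a : 'cV[C]_n) : psd H ->
  0 <= (a ^t* *m invmx (H + 1%:M) *m a) 0 0.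
Proof.
move=> hp; have [hH qH] := hp.
have Au : H + 1%:M \in unitmx by rewrite unitmxE unitfE gt_eqF ?detpos.
set A := H + 1%:M in Au *.
set y := invmx A *m a.
have -> : a = A *m y by rewrite /y mulmxA mulmxV // mul1mx.
rewrite trC_mul /A trC_add hH trC1 -/A -mulmxA (mulmxA (invmx A)) mulVmx // mul1mx.
rewrite /A mulmxDr mulmxDl mulmx1 mxE; apply: addr_ge0; first exact: qH.
exact: normsq_ge0.
Qed.

End Gen3.
Section Gen4.
Set Implicit Arguments. Unset Strict Implicit.
Variable C : numClosedFieldType.
Local Open Scope ring_scope.

Lemma det_formula n (H : 'M[C]_n) (a : 'cV[C]_n) (s : C) : psd H ->
  \det (H + s *: (a *m a ^t*) + 1%:M) =
  \det (H + 1%:M) * (1 + s * (a ^t* *m invmx (H + 1%:M) *m a) 0 0).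
Proof.
move=> hp.
have Au : H + 1%:M \in unitmx by rewrite unitmxE unitfE gt_eqF ?detpos.
set A := H + 1%:M in Au *.
have -> : H + s *: (a *m a ^t*) + 1%:M = A *m (1%:M + (invmx A *m (s *: a)) *m a ^t*).
  rewrite mulmxDr mulmx1 !mulmxA mulmxV // mul1mx /A.
  by rewrite scalemxAl addrAC.
rewrite det_mulmx det_rank1; congr (_ * (1 + _)).
by rewrite -!scalemxAr mxE mulmxA.
Qed.

Lemma det_mono n (H : 'M[C]_n) (a : 'cV[C]_n) (s t : C) : psd H ->
  0 <= s -> s <= t ->
  0 < \det (H + s *: (a *m a ^t*) + 1%:M) /\
  \det (H + s *: (a *m a ^t*) + 1%:M) <= \det (H + t *: (a *m a ^t*) + 1%:M).
Proof.
move=> hp s0 st; rewrite !det_formula //.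
have d0 := detpos hp; have q0 := quad_inv_ge0 a hp.
split.
  apply: mulr_gt0 => //; apply: (lt_le_trans ltr01).
  by rewrite lerDl mulr_ge0.
rewrite ler_pM2l // lerD2l ler_wpM2r //.
Qed.

End Gen4.
Section Gen5.
Set Implicit Arguments. Unset Strict Implicit.
Variable C : numClosedFieldType.
Local Open Scope ring_scope.

Lemma quad_le_tr n (Q : 'M[C]_n) (x : 'cV[C]_n) : psd Q ->
  x ^t* *m x = 1%:M -> (x ^t* *m Q *m x) 0 0 <= \tr Q.
Proof.
move=> [hQ qQ] hx.
set Pm := 1%:M - x *m x ^t*.
have hP : Pm ^t* = Pm.
  by rewrite /Pm linearB /= map_mxB trC1 trC_mul trmxCK.
have PP : Pm *m Pm = Pm.
  rewrite /Pm mulmxBl mul1mx mulmxBr mulmx1 -!mulmxA (mulmxA (x ^t*)) hx mul1mx.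
  by rewrite subrr subr0.
have t0 : 0 <= \tr (Pm *m Q *m Pm).
  rewrite /mxtrace; apply: sumr_ge0 => i _.
  rewrite -{2}hP quad_entry.
  by have := qQ ((row i Pm) ^t*); rewrite trmxCK.
have : \tr (Pm *m Q *m Pm) = \tr Q - (x ^t* *m Q *m x) 0 0.
  rewrite mxtrace_mulC mulmxA.
  rewrite PP /Pm mulmxBl mul1mx linearB /=.
  congr (_ - _); rewrite -trace_mx11 -mulmxA mxtrace_mulC.
  by rewrite [RHS]mxtrace_mulC mulmxA.
by move=> e; rewrite -subr_ge0 -e.
Qed.

End Gen5.
Section Gen6.
Set Implicit Arguments. Unset Strict Implicit.
Variable C : numClosedFieldType.
Local Open Scope ring_scope.

Lemma gram_rank1 m n (c : C) (a : 'cV[C]_m) (b : 'cV[C]_n) (Q : 'M[C]_n) :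
  (c *: (a *m b ^t*)) *m Q *m (c *: (a *m b ^t*)) ^t* =
  (c * Num.conj c * (b ^t* *m Q *m b) 0 0) *: (a *m a ^t*).
Proof.
rewrite trC_scale trC_mul trmxCK -!scalemxAl -!scalemxAr !scalerA.
have -> : a *m b ^t* *m Q *m (b *m a ^t*) = a *m (b ^t* *m Q *m b) *m a ^t*.
  by rewrite !mulmxA.
rewrite [b ^t* *m Q *m b]mx11_scalar mul_mx_scalar -scalemxAl scalerA.
by rewrite [in RHS]mxE.

Qed.

Lemma psd1 n : psd (1%:M : 'M[C]_n).
Proof. split; first exact: trC1. by move=> x; rewrite mulmx1; exact: normsq_ge0. Qed.

Lemma psd_scale n (p : C) (A : 'M[C]_n) : 0 <= p -> psd A -> psd (p *: A).
Proof.
move=> p0 [hA qA]; split.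
  by rewrite trC_scale hA conj_Creal // ger0_real.
by move=> x; rewrite -scalemxAr -scalemxAl mxE mulr_ge0.
Qed.

Lemma psd_rank1 n (p : C) (y : 'cV[C]_n) : 0 <= p -> psd (p *: (y *m y ^t*)).
Proof.
move=> p0; apply: psd_scale => //.
by have := psd_conj y (psd1 1); rewrite mulmx1.
Qed.

End Gen6.
Section Spec.
Set Implicit Arguments. Unset Strict Implicit.
Variable R : realType.
Local Open Scope ring_scope.

Lemma expi_norm (t : R) : `|expi t| = 1.
Proof. by rewrite normc_def /= cos2Dsin2 sqrtr1. Qed.

Lemma conj_mul_norm (z : R[i]) : Num.conj z * z = `|z| ^+ 2.
Proof. by rewrite sqr_normc mulrC. Qed.

Lemma aT_norm N (lam th : R) (w : 'I_N -> R) : (0 < N)%N ->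
  (aT lam th w) ^t* *m aT lam th w = 1%:M.
Proof.
move=> hN; apply/matrixP => i j; rewrite !ord1 !mxE /=.
transitivity (\sum_(n < N) (((N%:R : R))^-1)%:C).
  apply: eq_bigr => n _; rewrite !mxE conj_mul_norm normrM expi_norm mulr1.
  rewrite ger0_norm; last by rewrite ler0c invr_ge0 sqrtr_ge0.
  by rewrite -rmorphXn /= exprVn sqr_sqrtr ?ler0n.
by rewrite sumr_const card_ord -rmorphMn /= -mulr_natr mulVf ?pnatr_eq0 -?lt0n.
Qed.

End Spec.
Section Spec2.
Set Implicit Arguments. Unset Strict Implicit.
Variable R : realType.
Local Open Scope ring_scope.

Lemma chan_rank1 M N L (lam : R) (gamma : 'I_L -> R[i]) (beta theta : 'I_L -> R)
  (w : 'I_N -> R) (l0 : 'I_L) : (forall l : 'I_L, l = l0) ->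
  chan M lam gamma beta theta w =
  ((Num.sqrt ((M * N)%:R : R))%:C * gamma l0) *:
     (aR M lam (beta l0) *m (aT lam (theta l0) w) ^t*).
Proof.
move=> hl.
have s1 : forall F : 'I_L -> R[i], \sum_l F l = F l0.
  by move=> F; rewrite (bigD1 l0) //= big1 ?addr0 // => l; rewrite (hl l) eqxx.
apply/matrixP => i j; rewrite /chan !mxE s1 big_ord1 !mxE s1 !mxE eqxx mulr1n.
by ring.
Qed.
End Spec2.
Section Spec3.
Set Implicit Arguments. Unset Strict Implicit.
Variable R : realType.
Local Open Scope ring_scope.

Lemma ln_mono (x y : R[i]) : 0 < x -> x <= y ->
  ln (complex.Re x) <= ln (complex.Re y).
Proof.
move=> x0 xy; have y0 := lt_le_trans x0 xy.
move: x0 y0 xy; rewrite !ltcE !lecE /= => /andP[_ hx] /andP[_ hy] /andP[_ hxy].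
by rewrite ler_ln ?posrE.
Qed.

End Spec3.
Theorem lemma1 (R : realType) (M U : nat) (lam : R)
  (N L : 'I_U -> nat) (P W : 'I_U -> R)
  (gamma : forall v : 'I_U, 'I_(L v) -> R[i])
  (beta theta : forall v : 'I_U, 'I_(L v) -> R)
  (hM : (0 < M)%N) (hlam : 0 < lam)
  (hN : forall v, (0 < N v)%N)
  (hP : forall v, 0 < P v) (hW : forall v, 0 < W v)
  (hbeta : forall v l, 0 <= beta v l <= pi)
  (htheta : forall v l, 0 <= theta v l <= pi)
  (u : 'I_U) (hLu : L u = 1%N) :
  let G := fun (v : 'I_U) (w : 'I_(N v) -> R) =>
             chan M lam (gamma v) (beta v) (theta v) w in
  let l0 : 'I_(L u) := cast_ord (esym hLu) ord0 in
  ereal_sup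
    [set x : \bar R | exists (Q : forall v : 'I_U, 'M[R[i]]_(N v))
                             (w : forall v : 'I_U, 'I_(N v) -> R),
       (forall v, user_feasible (P v) (W v) (Q v) (w v)) /\
       x = (ln (complex.Re (\det (\sum_(v < U) (G v (w v) *m Q v *m (G v (w v)) ^t*)
                          + 1%:M))))%:E]
  =
  ereal_sup
    [set x : \bar R | exists (Q : forall v : 'I_U, 'M[R[i]]_(N v))
                             (w : forall v : 'I_U, 'I_(N v) -> R),
       (forall v, v != u -> user_feasible (P v) (W v) (Q v) (w v)) /\
       x = (ln (complex.Re (\det (\sum_(v < U | v != u)
                              (G v (w v) *m Q v *m (G v (w v)) ^t*)
                          + ((M * N u)%:R * (P u)%:C * `|gamma u l0| ^+ 2) *:
                              (aR M lam (beta u l0) *m (aR M lam (beta u l0)) ^t*)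
                          + 1%:M))))%:E].
Proof.
move=> G l0.
have hl : forall l : 'I_(L u), l = l0.
  move=> l; apply/val_inj => /=; have := ltn_ord l; move: (nat_of_ord l) => k.
  by rewrite hLu; case: k.
set th := theta u l0.
set aRu := aR M lam (beta u l0).
set t := ((M * N u)%:R * (P u)%:C * `|gamma u l0| ^+ 2).
set c := ((Num.sqrt ((M * N u)%:R : R))%:C * gamma u l0).
have cc : c * Num.conj c = (M * N u)%:R * `|gamma u l0| ^+ 2.
  rewrite mulrC conj_mul_norm normrM ger0_norm ?ler0c ?sqrtr_ge0 //.
  by rewrite exprMn -rmorphXn sqr_sqrtr ?ler0n // rmorph_nat.
have HG : forall w, G u w = c *: (aRu *m (aT lam th w) ^t*).
  by move=> w; rewrite /G /=; apply: chan_rank1.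
have Hterm : forall (Q : 'M[R[i]]_(N u)) w, psd Q -> \tr Q <= (P u)%:C ->
    exists s, (0 <= s <= t) /\
      G u w *m Q *m (G u w) ^t* = s *: (aRu *m aRu ^t*).
  move=> Q w hQ hT; rewrite HG gram_rank1 cc; eexists; split; last reflexivity.
  have q0 := hQ.2 (aT lam th w).
  have qT := quad_le_tr hQ (aT_norm lam th w (hN u)).
  have m0 : 0 <= (M * N u)%:R * `|gamma u l0| ^+ 2 :> R[i].
    by apply: mulr_ge0; rewrite ?ler0n ?exprn_ge0.
  apply/andP; split; first exact: mulr_ge0.
  rewrite /t mulrAC.
  apply: ler_wpM2r; first exact: exprn_ge0.
  apply: ler_wpM2l; first exact: ler0n.
  exact: le_trans qT hT.
have Hopt : forall w, G u w *m ((P u)%:C *: (aT lam th w *m (aT lam th w) ^t*))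
    *m (G u w) ^t* = t *: (aRu *m aRu ^t*).
  move=> w; rewrite HG gram_rank1 cc; congr (_ *: _).
  rewrite -scalemxAr -scalemxAl mxE !mulmxA aT_norm // mul1mx aT_norm //.
  rewrite mxE eqxx mulr1 /t.
  by rewrite mulrAC.
have key : forall (H : 'M[R[i]]_M) s, psd H -> 0 <= s <= t ->
    ((ln (complex.Re (\det (H + s *: (aRu *m aRu ^t*) + 1%:M))))%:E <=
     (ln (complex.Re (\det (H + t *: (aRu *m aRu ^t*) + 1%:M))))%:E)%E.
  move=> H s hH /andP[s0 st]; have [p le] := det_mono aRu hH s0 st.
  by rewrite lee_fin; exact: ln_mono.
apply/le_anti/andP; split.
- apply: ge_ereal_sup => _ [Q [w [hf ->]]].
  apply: le_ereal_sup_tmp.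
  eexists; first by exists Q, w; split; [move=> v _; exact: hf v | reflexivity].
  rewrite (bigD1 u) //=.
  have [hQ hT _ _] := hf u.
  have [s [hs ->]] := Hterm (Q u) (w u) hQ hT.
  rewrite [s *: _ + _]addrC; apply: key hs.
  apply: psd_sum => v _; apply: psd_conj; by have [] := hf v.
- apply: ge_ereal_sup => _ [Q [w [hf ->]]].
  apply: le_ereal_sup_tmp.
  pose w0 := fun v => (fun n : 'I_(N v) => W v * n%:R / (N v)%:R).
  pose Q' := fun v => if v == u
    then (P v)%:C *: (aT lam th (w0 v) *m (aT lam th (w0 v)) ^t*) else Q v.
  pose w' := fun v => if v == u then w0 v else w v.
  have Hs : \sum_(v < U | v != u) G v (w' v) *m Q' v *m (G v (w' v)) ^t* =
            \sum_(v < U | v != u) G v (w v) *m Q v *m (G v (w v)) ^t*.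
    by apply: eq_bigr => v hv; rewrite /Q' /w' (negbTE hv).
  eexists.
    exists Q', w'; split; last reflexivity.
    move=> v; rewrite /Q' /w'; case: (v =P u) => [->|/eqP nv]; last exact: hf.
    rewrite /user_feasible; apply: And4.
    + by apply: psd_rank1; rewrite ler0c; exact: ltW (hP u).
    + rewrite mxtraceZ.
      rewrite mxtrace_mulC.
      rewrite (aT_norm _ _ _ (hN u)).
      rewrite mxtrace1 mulr1.
      by rewrite lexx.
    + move=> n; rewrite /w0; apply/andP; split.
        apply: divr_ge0; last exact: ler0n.
        by apply: mulr_ge0; [exact: ltW (hW u) | exact: ler0n].
      rewrite -mulrA; apply: ler_piMr; first exact: ltW (hW u).
      rewrite ler_pdivrMr; last by rewrite ltr0n.
      rewrite mul1r ler_nat.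
      exact: ltnW (ltn_ord n).
    + move=> a b; rewrite /w0 -!mulrA.
      move=> /(mulfI (negbT (gt_eqF (hW u)))).
      have nz : ((N u)%:R : R)^-1 != 0 by rewrite invr_eq0 pnatr_eq0 -lt0n hN.
      move=> /(mulIf nz) /eqP; rewrite eqr_nat => /eqP.
      exact: val_inj.
  have Hu : G u (w' u) *m Q' u *m (G u (w' u)) ^t* = t *: (aRu *m aRu ^t*).
    by rewrite /Q' /w' eqxx; exact: Hopt.
  clearbody Q' w'.
  rewrite le_eqVlt; apply/orP; left; apply/eqP; congr (_%:E); congr (ln (complex.Re (\det (_ + _)))).
  symmetry; apply: (etrans (bigD1 u isT)).
  apply: etrans (addrC _ _).
  apply: (f_equal2 +%R).
  all: first [exact: Hs | exact: Hu].
Qed.
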